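(* For every positive integer $n$, $\delta(n)\le 13\log_6 n+7$; that is, $n\in E_k$ for every integer $k\ge 13\log_6 n+7$.
   Context: For a finite nonempty multiset $S$ of real numbers, $V(S)$ is the smallest set of real numbers such that: (1) if $|S|=1$ then $S\subseteq V(S)$; (2) if $|S|\ge 2$, then for all nonempty multisets $A,B$ with $A+B=S$ (multiplicities add) and all $a\in V(A)$, $b\in V(B)$, each of $a+b,\ a-b,\ b-a,\ ab,\ a/b,\ b/a,\ a^b,\ b^a$ lies in $V(S)$ whenever it is a well-defined real number; (3) if $a\in V(S)$ is a nonnegative integer then $a!\in V(S)$ (with $0!=1$). Let $D=\{0,\dots,9\}$; for $k\ge1$, $E_k$ is the intersection of $V(S)$ over all multisets $S$ of size $k$ with all elements in $D$ (one has $E_k\subseteq E_{k+1}$). For a number $n$, $\delta(n)=\min\{k\ge1: n\in E_k\}$. *)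

(* Defs.v *)
From Stdlib Require Import Reals List Permutation ZArith.
Open Scope R_scope.

(* rpow_rel a b c : a^b is a well-defined real number equal to c.
   Defined when a > 0 (any real b), a = 0 and b > 0 (value 0),
   or a < 0 and b an integer (value powerRZ a b). 0^0 is undefined. *)
Inductive rpow_rel : R -> R -> R -> Prop :=
| rpow_pos : forall a b, 0 < a -> rpow_rel a b (Rpower a b)
| rpow_zero : forall b, 0 < b -> rpow_rel 0 b 0
| rpow_negint : forall a (z : Z), a < 0 -> rpow_rel a (IZR z) (powerRZ a z).

Definition op_res (a b c : R) : Prop :=
  c = a + b \/ c = a - b \/ c = b - a \/ c = a * b \/
  (b <> 0 /\ c = a / b) \/ (a <> 0 /\ c = b / a) \/
  rpow_rel a b c \/ rpow_rel b a c.

(* InV S x : x is in V(S), with the multiset S represented by a list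
   (up to permutation). *)
Inductive InV : list R -> R -> Prop :=
| InV_single : forall x, InV (x :: nil) x
| InV_comb : forall (A B S : list R) (a b c : R),
    A <> nil -> B <> nil -> Permutation (A ++ B) S ->
    InV A a -> InV B b -> op_res a b c -> InV S c
| InV_fact : forall (S : list R) (m : nat),
    InV S (INR m) -> InV S (INR (fact m)).

Definition InE (k : nat) (x : R) : Prop :=
  forall ds : list nat, length ds = k -> Forall (fun d => (d < 10)%nat) ds ->
    InV (map INR ds) x.

Definition log6 (x : R) : R := ln x / ln 6.

(* Main.v *)
Require Import Defs.
From Stdlib Require Import Reals List Permutation ZArith Lia NArith Lra.
Open Scope R_scope.

Lemma InV_perm : forall S x, InV S x -> forall S', Permutation S S' -> InV S' x.
Proof.
  induction 1; intros S' HP.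
  - apply Permutation_length_1_inv in HP. subst. constructor.
  - apply (InV_comb A B S' a b c); auto. eapply perm_trans; eauto.
  - apply InV_fact. auto.
Qed.

Lemma InV_nonnil : forall S x, InV S x -> S <> nil.
Proof.
  induction 1; try congruence.
  intro E; subst. apply Permutation_sym, Permutation_nil in H1.
  destruct A; [congruence| discriminate].
Qed.

Lemma InV_two : forall x y c, op_res x y c -> InV (x :: y :: nil) c.
Proof.
  intros. apply (InV_comb (x::nil) (y::nil) _ x y c); try congruence; try constructor; auto.
Qed.

Lemma exists_val : forall L, L <> nil -> exists y, InV L y.
Proof.
  induction L as [|a L IH]; intros H; [congruence|].
  destruct L as [|b L]. - exists a; constructor.
  - destruct IH as [y Hy]; [discriminate|].
    exists (a + y). apply (InV_comb (a::nil) (b::L) _ a y); try congruence; try constructor; auto.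
    all: unfold op_res; auto.
Qed.

Lemma Rpower_base1 : forall y, Rpower 1 y = 1.
Proof. intros; unfold Rpower; rewrite ln_1, Rmult_0_r, exp_0; reflexivity. Qed.

Lemma one_pow : forall B L, InV B 1 -> L <> nil -> InV (B ++ L) 1.
Proof.
  intros B L HB HL. destruct (exists_val L HL) as [y Hy].
  apply (InV_comb B L (B++L) 1 y 1); eauto using InV_nonnil.
  unfold op_res. do 6 right. left. rewrite <- (Rpower_base1 y) at 2. constructor. lra.
Qed.

Definition Ones (u : nat) (S : list R) : Prop :=
  exists bl : list (list R), length bl = u /\ Forall (fun B => InV B 1) bl /\
    Permutation (concat bl) S.

Lemma Ones_perm : forall u S S', Ones u S -> Permutation S S' -> Ones u S'.
Proof. intros u S S' [bl [H1 [H2 H3]]] HP. exists bl; repeat split; auto. eapply perm_trans; eauto. Qed.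

Lemma Ones_app : forall a b A B, Ones a A -> Ones b B -> Ones (a+b) (A++B).
Proof.
  intros a b A B [b1 [H1 [H2 H3]]] [b2 [G1 [G2 G3]]].
  exists (b1 ++ b2). rewrite length_app, concat_app. repeat split; auto.
  apply Forall_app; auto. apply Permutation_app; auto.
Qed.

Lemma Ones_one : forall S, InV S 1 -> Ones 1 S.
Proof. intros S H. exists (S :: nil). simpl. rewrite app_nil_r. repeat split; auto. Qed.

Lemma Ones_merge : forall u X, Ones (u + 1) X -> (1 <= u)%nat -> Ones u X.
Proof.
  intros u X [bl [H1 [H2 H3]]] Hu.
  destruct bl as [|B1 [|B2 bl]]; simpl in H1; try lia.
  inversion H2; subst. inversion H5; subst.
  exists ((B1 ++ B2) :: bl). simpl. split; [lia|]. split.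
  - constructor; auto. apply (InV_comb B1 B2 _ 1 1 1); eauto using InV_nonnil.
    unfold op_res. do 3 right. left. ring.
  - simpl in H3. rewrite <- app_assoc. auto.
Qed.

Lemma Ones_mono : forall d u X, Ones (u + d) X -> (1 <= u)%nat -> Ones u X.
Proof.
  induction d; intros u X H Hu. - rewrite Nat.add_0_r in H; auto.
  - apply IHd; auto. apply Ones_merge; [|lia]. replace (u+d+1)%nat with (u + S d)%nat by lia. auto.
Qed.

Lemma Ones_absorb : forall u X L, Ones u X -> (1 <= u)%nat -> Ones u (X ++ L).
Proof.
  intros u X L [bl [H1 [H2 H3]]] Hu. destruct L as [|l L]. rewrite app_nil_r; exists bl; auto.
  destruct bl as [|B1 bl]; simpl in H1; try lia.
  inversion H2; subst.
  exists ((B1 ++ l :: L) :: bl). simpl. split; [lia|]. split.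
  - constructor; auto. apply one_pow; auto; discriminate.
  - simpl in H3. eapply perm_trans; [|apply Permutation_app_tail; exact H3].
    rewrite <- !app_assoc. apply Permutation_app_head. apply Permutation_app_comm.
Qed.

Lemma concat_nonnil : forall bl, Forall (fun B => InV B 1) bl -> bl <> nil -> concat bl <> nil.
Proof.
  intros [|B bl] HF H; [congruence|]. inversion HF; subst. simpl.
  apply InV_nonnil in H2. destruct B; [congruence|discriminate].
Qed.

Lemma Ones_split : forall a b S, Ones (a+b) S -> (1 <= a)%nat -> (1 <= b)%nat ->
  exists A B, A <> nil /\ B <> nil /\ Permutation (A++B) S /\ Ones a A /\ Ones b B.
Proof.
  intros a b S [bl [H1 [H2 H3]]] Ha Hb.
  rewrite <- (firstn_skipn a bl) in H2, H3. apply Forall_app in H2 as [F1 F2].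
  rewrite concat_app in H3.
  assert (L1 : length (firstn a bl) = a) by (rewrite length_firstn; lia).
  assert (L2 : length (skipn a bl) = b) by (rewrite length_skipn; lia).
  exists (concat (firstn a bl)), (concat (skipn a bl)). repeat split; auto.
  - apply concat_nonnil; auto. intro E; rewrite E in L1; simpl in L1; lia.
  - apply concat_nonnil; auto. intro E; rewrite E in L2; simpl in L2; lia.
  - exists (firstn a bl); auto.
  - exists (skipn a bl); auto.
Qed.

Definition GenR (z : R) (u : nat) : Prop := forall S, Ones u S -> InV S z.

Lemma GenR_comb : forall x y z a b, GenR x a -> GenR y b -> (1 <= a)%nat -> (1 <= b)%nat ->
  op_res x y z -> GenR z (a+b).
Proof.
  intros x y z a b Gx Gy Ha Hb Hop S HS.
  destruct (Ones_split a b S HS Ha Hb) as [A [B [NA [NB [HP [OA OB]]]]]].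
  apply (InV_comb A B S x y z); auto.
Qed.

Lemma GenR_1 : GenR (INR 1) 1.
Proof.
  intros S [bl [H1 [H2 H3]]]. destruct bl as [|B [|]]; simpl in H1; try lia.
  inversion H2; subst. simpl in H3. rewrite app_nil_r in H3. eapply InV_perm; eauto.
Qed.

Lemma GenR_fact : forall m u, GenR (INR m) u -> GenR (INR (fact m)) u.
Proof. intros m u G S H. apply InV_fact. auto. Qed.

Lemma GenR_2 : GenR (INR 2) 2.
Proof.
  apply (GenR_comb (INR 1) (INR 1) _ 1 1); auto using GenR_1.
  left. simpl. ring.
Qed.

Lemma GenR_3 : GenR (INR 3) 3.
Proof.
  apply (GenR_comb (INR 2) (INR 1) _ 2 1); auto using GenR_1, GenR_2.
  left. simpl. ring.
Qed.

Lemma GenR_6 : GenR (INR 6) 3.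
Proof. apply (GenR_fact 3). apply GenR_3. Qed.

Lemma natN (a b : nat) : (N.of_nat a <= N.of_nat b)%N -> (a <= b)%nat.
Proof. lia. Qed.

Lemma bound2 : forall um m n c b, (6^(2*um) <= 36*m^13)%nat -> (6^c <= b^13)%nat ->
  (b*m <= n)%nat -> (6^(2*um+c) <= 36*n^13)%nat.
Proof.
  intros um m n c b H1 H2 H3.
  rewrite Nat.pow_add_r.
  apply Nat.le_trans with (36 * m^13 * b^13)%nat.
  - apply Nat.mul_le_mono; auto.
  - rewrite <- Nat.mul_assoc, <- Nat.pow_mul_l. apply Nat.mul_le_mono_l.
    apply Nat.pow_le_mono_l. lia.
Qed.

Lemma GenR_small : forall r, (1 <= r <= 3)%nat -> GenR (INR r) r.
Proof.
  intros r Hr. destruct r as [|[|[|[|]]]]; try lia.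
  apply GenR_1. apply GenR_2. apply GenR_3.
Qed.

Lemma claimG : forall N n, (n <= N)%nat -> (1 <= n)%nat ->
  exists u, (1 <= u)%nat /\ (6^(2*u) <= 36 * n^13)%nat /\ GenR (INR n) u.
Proof.
  induction N; intros n HnN Hn1; [lia|].
  destruct (Nat.lt_ge_cases n 4) as [Hs|Hb].
  { destruct n as [|[|[|[|]]]]; try lia.
    - exists 1%nat. split; [lia|]. split; [simpl; lia|]. apply GenR_1.
    - exists 2%nat. split; [lia|]. split.
      + apply natN. rewrite !Nat2N.inj_mul, !Nat2N.inj_pow. vm_compute. discriminate.
      + apply GenR_2.
    - exists 3%nat. split; [lia|]. split.
      + apply natN. rewrite !Nat2N.inj_mul, !Nat2N.inj_pow. vm_compute. discriminate.
      + apply GenR_3. }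
  pose proof (Nat.div_mod_eq n 6) as Hdm. pose proof (Nat.mod_upper_bound n 6 ltac:(lia)) as Hr.
  remember (n / 6)%nat as m. remember (n mod 6)%nat as r.
  destruct (Nat.le_gt_cases r 3) as [Hr3|Hr4].
  - destruct (IHN m ltac:(lia) ltac:(lia)) as [um [Hu1 [Hub Gm]]].
    assert (G6m : GenR (INR (m*6)) (um+3)).
    { apply (GenR_comb (INR m) (INR 6)); auto using GenR_6; try lia.
      right; right; right; left. apply mult_INR. }
    destruct (Nat.eq_dec r 0) as [Hr0|Hr0].
    + exists (um+3)%nat. split; [lia|]. split.
      * replace (2*(um+3))%nat with (2*um+6)%nat by lia. apply (bound2 um m n 6 6); auto; [apply Nat.pow_le_mono_r; lia | lia].
      * replace n with (m*6)%nat by lia. auto.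
    + exists (um+3+r)%nat. split; [lia|]. split.
      * replace (2*(um+3+r))%nat with (2*um+(6+2*r))%nat by lia.
        apply (bound2 um m n _ 6); auto; [apply Nat.pow_le_mono_r; lia | lia].
      * apply (GenR_comb (INR (m*6)) (INR r)); auto; try lia.
        apply GenR_small; lia.
        left. rewrite <- plus_INR. f_equal. lia.
  - remember (6 - r)%nat as s.
    destruct (IHN (m+1)%nat ltac:(lia) ltac:(lia)) as [um [Hu1 [Hub Gm]]].
    assert (G6m : GenR (INR ((m+1)*6)) (um+3)).
    { apply (GenR_comb (INR (m+1)) (INR 6)); auto using GenR_6; try lia.
      right; right; right; left. apply mult_INR. }
    exists (um+3+s)%nat. split; [lia|]. split.
    + replace (2*(um+3+s))%nat with (2*um+(6+2*s))%nat by lia.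
      destruct (Nat.eq_dec r 4) as [E|E].
      * replace s with 2%nat by lia.
        apply (bound2 um (m+1) n _ 4); [exact Hub| |lia].
        apply natN. rewrite !Nat2N.inj_pow. vm_compute. discriminate.
      * replace s with 1%nat by lia.
        apply (bound2 um (m+1) n _ 5); [exact Hub| |lia].
        apply natN. rewrite !Nat2N.inj_pow. vm_compute. discriminate.
    + apply (GenR_comb (INR ((m+1)*6)) (INR s)); auto; try lia.
      apply GenR_small; lia.
      right; left. rewrite <- minus_INR by lia. f_equal. lia.
Qed.

Definition Sparse (t : list nat) : Prop :=
  Forall (fun d => (2 <= d <= 9)%nat) t /\ NoDup (map Nat.div2 t).

Lemma sparse_len : forall t, Sparse t -> (length t <= 4)%nat.
Proof.
  intros t [HF HN]. rewrite <- (length_map Nat.div2 t).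
  apply (NoDup_incl_length (l:=map Nat.div2 t) (l':=(1::2::3::4::nil)%nat) HN).
  intros x Hx. apply in_map_iff in Hx as [d [E Hd]]. subst.
  rewrite Forall_forall in HF. specialize (HF d Hd).
  destruct d as [|[|[|[|[|[|[|[|[|[|]]]]]]]]]]; simpl; try lia; tauto.
Qed.

Definition unitd (g : list nat) : Prop := InV (map INR g) 1.

Lemma unit01 : forall d, (d <= 1)%nat -> unitd (d :: nil).
Proof.
  intros d Hd. unfold unitd. destruct d as [|[|]]; try lia; simpl.
  - change 1 with (INR (fact 0)). apply InV_fact. constructor.
  - constructor.
Qed.

Lemma unitpair : forall d e, (2 <= d)%nat -> Nat.div2 d = Nat.div2 e -> unitd (d :: e :: nil).
Proof.
  intros d e Hd He. unfold unitd. simpl. apply InV_two.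
  pose proof (Nat.div2_odd d). pose proof (Nat.div2_odd e).
  destruct (Nat.odd d), (Nat.odd e); simpl in *.
  - assert (d = e) by lia. subst. right; right; right; right; left.
    split. apply not_0_INR; lia. field. apply not_0_INR; lia.
  - assert (d = e + 1)%nat by lia. subst. right; left. rewrite plus_INR. simpl. ring.
  - assert (e = d + 1)%nat by lia. subst. right; right; left. rewrite plus_INR. simpl. ring.
  - assert (d = e) by lia. subst. right; right; right; right; left.
    split. apply not_0_INR; lia. field. apply not_0_INR; lia.
Qed.

Lemma ext : forall ds, Forall (fun d => (d < 10)%nat) ds ->
  (exists g rest, Permutation ds (g ++ rest) /\ unitd g /\ (length g <= 2)%nat) \/ Sparse ds.
Proof.
  induction ds as [|d t IH]; intros HF.
  - right. split; constructor.
  - inversion HF; subst. destruct (IH H2) as [[g [rest [HP [HU HL]]]] | HS].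
    + left. exists g, (d :: rest). repeat split; auto.
      eapply perm_trans; [apply perm_skip; exact HP|]. apply Permutation_middle.
    + destruct (Nat.le_gt_cases d 1) as [H01|H2'].
      * left. exists (d :: nil), t. repeat split; auto. apply unit01; auto.
      * destruct (in_dec Nat.eq_dec (Nat.div2 d) (map Nat.div2 t)) as [Hi|Hn].
        -- apply in_map_iff in Hi as [e [Ee He]]. apply in_split in He as [l1 [l2 El]]. subst t.
           left. exists (d :: e :: nil), (l1 ++ l2). repeat split; auto.
           ++ simpl. apply perm_skip. apply Permutation_sym, Permutation_middle.
           ++ apply unitpair; auto; lia.
        -- right. destruct HS as [HS1 HS2]. split.
           ++ constructor; auto. lia.
           ++ simpl. constructor; auto.
Qed.

Lemma digits_claim : forall N ds, (length ds <= N)%nat -> Forall (fun d => (d < 10)%nat) ds ->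
  exists U, (length ds <= 2*U+5)%nat /\ ((1 <= U)%nat -> Ones U (map INR ds)).
Proof.
  induction N; intros ds HL HF.
  - exists 0%nat. split; [lia| intros; lia].
  - destruct (ext ds HF) as [[g [rest [HP [HU Hg]]]] | HS].
    + assert (Hg1 : g <> nil) by (intro E; subst; apply InV_nonnil in HU; auto).
      assert (HLen : length ds = (length g + length rest)%nat)
        by (rewrite (Permutation_length HP), length_app; auto).
      assert (length g <> 0%nat) by (destruct g; simpl; congruence).
      assert (HFr : Forall (fun d => (d < 10)%nat) rest).
      { apply (Permutation_Forall HP) in HF. apply Forall_app in HF. tauto. }
      destruct (IHN rest ltac:(lia) HFr) as [U [HU1 HU2]].
      exists (S U). split; [lia|]. intros _.
      apply Ones_perm with (map INR g ++ map INR rest).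
      2:{ rewrite <- map_app. apply Permutation_map, Permutation_sym; auto. }
      destruct (Nat.eq_dec U 0) as [E|E].
      * subst U. apply Ones_absorb; [|lia]. apply Ones_one; auto.
      * replace (S U) with (1 + U)%nat by lia. apply Ones_app; [apply Ones_one; auto|]. apply HU2; lia.
    + exists 0%nat. split; [apply sparse_len in HS; lia| intros; lia].
Qed.

Theorem theorem6p2 : forall (n k : nat), (1 <= n)%nat ->
  INR k >= 13 * log6 (INR n) + 7 -> InE k (INR n).
Proof.
  intros n k Hn Hk ds Hlen HF.
  destruct (claimG n n (Nat.le_refl n) Hn) as [u [Hu1 [Hub Gn]]].
  assert (Hl6 : 0 < ln 6) by (rewrite <- ln_1; apply ln_increasing; lra).
  assert (Hnpos : 0 < INR n) by (apply lt_0_INR; lia).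
  assert (Hku : (2*u + 5 <= k)%nat).
  { apply INR_le. apply le_INR in Hub. rewrite mult_INR, !pow_INR in Hub.
    assert (Hln : ln (INR 6 ^ (2*u)) <= ln (INR 36 * INR n ^ 13)).
    { destruct (Rle_lt_or_eq_dec _ _ Hub) as [Hlt|Heq].
      - apply Rlt_le, ln_increasing; auto. apply pow_lt. simpl; lra.
      - rewrite Heq; lra. }
    rewrite ln_pow in Hln by (simpl; lra).
    rewrite ln_mult in Hln by (try apply pow_lt; auto; simpl; lra).
    rewrite ln_pow in Hln by auto.
    replace (INR 36) with (INR 6 ^ 2) in Hln by (simpl; ring).
    rewrite ln_pow in Hln by (simpl; lra).
    replace (INR 6) with 6 in Hln by (simpl; ring).
    unfold log6 in Hk.
    assert (H13 : 13 * ln (INR n) <= (INR k - 7) * ln 6).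
    { apply Rge_le in Hk. apply Rmult_le_compat_r with (r := ln 6) in Hk; [|lra].
      replace ((13 * (ln (INR n) / ln 6) + 7) * ln 6) with (13 * ln (INR n) + 7 * ln 6) in Hk
        by (field; lra). lra. }
    rewrite plus_INR, mult_INR. simpl (INR 2); simpl (INR 5).
    assert (INR (2*u) * ln 6 <= (INR k - 5) * ln 6). { replace (INR 2) with 2 in Hln by (simpl; ring). replace (INR 13) with 13 in Hln by (simpl; ring). lra. }
    rewrite mult_INR in H. simpl (INR 2) in H.
    apply Rmult_le_reg_r in H; auto. lra. }
  destruct (digits_claim k ds (Nat.eq_le_incl _ _ Hlen) HF) as [U [HU1 HU2]].
  apply Gn. apply (Ones_mono (U - u)); [|auto].
  replace (u + (U - u))%nat with U by lia. apply HU2. lia.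
Qed.
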